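(* Let $d=1$. For $x\in\mathbb{R}$, $$\#\Phi(x)=\begin{cases}\aleph_0 & \text{if } x\in\mathbb{Q},\\ 2^{\aleph_0} & \text{if } x\in\mathrm{WA}\setminus\mathbb{Q},\\ 0 & \text{if } x\in\mathrm{Bad}.\end{cases}$$
   Context: For $t\in\mathbb{R}$, $\|t\|$ is the distance from $t$ to $\mathbb{Z}$. Write $\mathbb{N}=\{1,2,\dots\}$. $\mathrm{Bad}=\{x\in\mathbb{R}:\inf_{n\in\mathbb{N}}n\|nx\|>0\}$ and $\mathrm{WA}=\mathbb{R}\setminus\mathrm{Bad}$. $\mathcal{D}$ is the set of all non-increasing $\psi:\mathbb{N}\to\mathbb{R}_{\ge0}$ with $\sum_n\psi(n)=\infty$. $W(\psi)$ is the set of $(x,y)\in\mathbb{R}^2$ with $\|nx+y\|<\psi(n)$ for infinitely many $n\in\mathbb{N}$. $\Pi=\bigcap_{\psi\in\mathcal{D}}W(\psi)$ and $\Phi(x)=\{y\in\mathbb{R}:(x,y)\in\Pi\}$. *)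

(* Defs.v *)
From Stdlib Require Import Reals Lra Lia.
Open Scope R_scope.

(* ||t|| : distance from t to the nearest integer.
   With fl = floor t (= Int_part t), the nearest integers are fl and fl+1. *)
Definition dist_Z (t : R) : R :=
  Rmin (t - IZR (Int_part t)) (IZR (Int_part t) + 1 - t).

Definition Bad (x : R) : Prop :=
  exists c : R, c > 0 /\ forall n : nat, (1 <= n)%nat -> INR n * dist_Z (INR n * x) >= c.

Definition WA (x : R) : Prop := ~ Bad x.

Definition rational (x : R) : Prop :=
  exists p q : Z, q <> 0%Z /\ x = IZR p / IZR q.

Fixpoint psum (psi : nat -> R) (N : nat) : R :=
  match N with
  | O => 0
  | S k => psum psi k + psi (S k)
  end.

(* The class D : psi defined on N = {1,2,...} (values at 0 are irrelevant),
   non-negative, non-increasing, with divergent sum. *)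
Definition in_D (psi : nat -> R) : Prop :=
  (forall n : nat, (1 <= n)%nat -> 0 <= psi n) /\
  (forall m n : nat, (1 <= m)%nat -> (m <= n)%nat -> psi n <= psi m) /\
  (forall M : R, exists N : nat, psum psi N > M).

Definition W (psi : nat -> R) (x y : R) : Prop :=
  forall N : nat, exists n : nat, (N < n)%nat /\ (1 <= n)%nat /\
    dist_Z (INR n * x + y) < psi n.

Definition Pi (x y : R) : Prop := forall psi : nat -> R, in_D psi -> W psi x y.

Definition Phi (x : R) : R -> Prop := fun y => Pi x y.

Definition countably_infinite (S : R -> Prop) : Prop :=
  exists f : nat -> R, (forall m n, f m = f n -> m = n) /\
                       (forall y, S y <-> exists n, f n = y).

Definition has_card_continuum (S : R -> Prop) : Prop :=
  exists f : R -> R, (forall a b, f a = f b -> a = b) /\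
                     (forall y, S y <-> exists a, f a = y).

Definition is_empty (S : R -> Prop) : Prop := forall y, ~ S y.

(* Main.v *)
Require Import Defs.
From Stdlib Require Import Reals.
From Stdlib Require Import Lra Lia ZArith ClassicalEpsilon Classical Cantor.
From Coquelicot Require Import Coquelicot.
Open Scope R_scope.

Lemma Int_part_shift t m : Int_part (t + IZR m) = (Int_part t + m)%Z.
Proof.
  unfold Int_part.
  destruct (archimed t) as [H1 H2].
  assert (E : (up t + m)%Z = up (t + IZR m)).
  { apply tech_up; rewrite plus_IZR; lra. }
  rewrite <- E. lia.
Qed.

Lemma dist_Z_shift t m : dist_Z (t + IZR m) = dist_Z t.
Proof.
  unfold dist_Z. rewrite Int_part_shift, plus_IZR.
  f_equal; ring.
Qed.

Lemma dist_Z_nonneg t : 0 <= dist_Z t.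
Proof.
  unfold dist_Z. destruct (base_Int_part t).
  unfold Rmin; destruct Rle_dec; lra.
Qed.

Lemma dist_Z_le t k : dist_Z t <= Rabs (t - IZR k).
Proof.
  unfold dist_Z. destruct (base_Int_part t) as [H1 H2].
  destruct (Z_le_gt_dec k (Int_part t)) as [Hk|Hk].
  - apply IZR_le in Hk.
    rewrite Rabs_pos_eq by lra.
    apply Rle_trans with (t - IZR (Int_part t)); [apply Rmin_l| lra].
  - assert (Hk' : (Int_part t + 1 <= k)%Z) by lia.
    apply IZR_le in Hk'. rewrite plus_IZR in Hk'.
    rewrite Rabs_left by lra.
    apply Rle_trans with (IZR (Int_part t) + 1 - t); [apply Rmin_r| lra].
Qed.

Lemma dist_Z_attained t : exists k, Rabs (t - IZR k) = dist_Z t.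
Proof.
  unfold dist_Z. destruct (base_Int_part t) as [H1 H2].
  unfold Rmin; destruct Rle_dec.
  - exists (Int_part t). rewrite Rabs_pos_eq; lra.
  - exists (Int_part t + 1)%Z. rewrite plus_IZR, Rabs_left; lra.
Qed.

Lemma dist_Z_triangle u v : dist_Z (u - v) <= dist_Z u + dist_Z v.
Proof.
  destruct (dist_Z_attained u) as [ku Hu].
  destruct (dist_Z_attained v) as [kv Hv].
  apply Rle_trans with (Rabs (u - v - IZR (ku - kv))); [apply dist_Z_le|].
  replace (u - v - IZR (ku - kv)) with ((u - IZR ku) + (- (v - IZR kv)))
    by (rewrite minus_IZR; ring).
  rewrite <- Hu, <- Hv, <- (Rabs_Ropp (v - IZR kv)). apply Rabs_triang.
Qed.

Lemma dist_Z_IZR k : dist_Z (IZR k) = 0.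
Proof.
  apply Rle_antisym; [|apply dist_Z_nonneg].
  apply Rle_trans with (Rabs (IZR k - IZR k)); [apply dist_Z_le|].
  rewrite Rminus_diag, Rabs_R0; lra.
Qed.

Lemma dist_Z_zero t : dist_Z t = 0 -> exists k, t = IZR k.
Proof.
  intro H. destruct (dist_Z_attained t) as [k Hk]. exists k.
  rewrite H in Hk. revert Hk. unfold Rabs; destruct Rcase_abs; intros; lra.
Qed.

Lemma dist_Z_small k s : dist_Z (IZR k + s) <= Rabs s.
Proof.
  apply Rle_trans with (Rabs (IZR k + s - IZR k)); [apply dist_Z_le|].
  right; f_equal; ring.
Qed.

Lemma dist_Z_le_half t : dist_Z t <= 1.
Proof.
  unfold dist_Z. destruct (base_Int_part t).
  unfold Rmin; destruct Rle_dec; lra.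
Qed.

Lemma psum_mono psi : (forall n, (1 <= n)%nat -> 0 <= psi n) ->
  forall a b, (a <= b)%nat -> psum psi a <= psum psi b.
Proof.
  intros Hp a b Hab. induction Hab; [lra|].
  simpl. assert (0 <= psi (S m)) by (apply Hp; lia). lra.
Qed.

Lemma psum_nonneg psi : (forall n, (1 <= n)%nat -> 0 <= psi n) ->
  forall a, 0 <= psum psi a.
Proof.
  intros Hp a. apply Rle_trans with (psum psi 0); [simpl; lra|].
  apply psum_mono; [auto|lia].
Qed.

Lemma psum_upper psi : (forall m n, (1 <= m)%nat -> (m <= n)%nat -> psi n <= psi m) ->
  forall a L, (1 <= a)%nat -> psum psi (a + L)%nat <= psum psi a + INR L * psi a.
Proof.
  intros Hm a L Ha. induction L.
  - rewrite Nat.add_0_r. simpl. lra.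
  - rewrite Nat.add_succ_r. simpl psum. rewrite S_INR.
    assert (psi (S (a + L)) <= psi a) by (apply Hm; lia). lra.
Qed.

Lemma psum_lower psi : (forall m n, (1 <= m)%nat -> (m <= n)%nat -> psi n <= psi m) ->
  forall a L, (1 <= a)%nat -> psum psi (a + L)%nat >= psum psi a + INR L * psi (a + L)%nat.
Proof.
  intros Hm a L Ha. induction L.
  - rewrite Nat.add_0_r. simpl. lra.
  - rewrite Nat.add_succ_r. simpl psum. rewrite S_INR.
    assert (psi (S (a + L)) <= psi (a + L)%nat) by (apply Hm; lia).
    assert (0 <= INR L) by apply pos_INR.
    assert (INR L * psi (S (a + L)) <= INR L * psi (a + L)%nat) by (apply Rmult_le_compat_l; lra). lra.
Qed.

Lemma psi_pos psi : in_D psi -> forall n, (1 <= n)%nat -> 0 < psi n.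
Proof.
  intros [Hp [Hm Hd]] n Hn.
  destruct (Rle_lt_or_eq_dec 0 (psi n) (Hp n Hn)) as [H|H]; [exact H|exfalso].
  assert (B : forall k, psum psi (n + k)%nat = psum psi n).
  { induction k. - now rewrite Nat.add_0_r.
    - rewrite Nat.add_succ_r. simpl. rewrite IHk.
      assert (psi (S (n + k)) <= psi n) by (apply Hm; lia).
      assert (0 <= psi (S (n + k))) by (apply Hp; lia). lra. }
  destruct (Hd (psum psi n)) as [N HN].
  assert (psum psi N <= psum psi (n + N)%nat) by (apply psum_mono; [auto|lia]).
  rewrite B in H0. lra.
Qed.


Fixpoint hm (a : nat -> R) (j : nat) : R :=
  match j with O => a O | S j => Rmin (hm a j) (a (S j)) end.

Lemma hm_step a j : hm a (S j) <= hm a j /\ hm a (S j) <= a (S j).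
Proof. simpl. split; [apply Rmin_l|apply Rmin_r]. Qed.

Lemma hm_anti a i j : (i <= j)%nat -> hm a j <= hm a i.
Proof.
  intro H. induction H; [lra|]. pose proof (hm_step a m). lra.
Qed.

Lemma hm_le a i j : (i <= j)%nat -> hm a j <= a i.
Proof.
  intro H. apply Rle_trans with (hm a i); [now apply hm_anti|].
  destruct i; simpl; [lra|apply Rmin_r].
Qed.

Lemma hm_att a j : exists i, (i <= j)%nat /\ hm a j = a i.
Proof.
  induction j.
  - exists O; split; simpl; auto.
  - destruct IHj as [i [Hi E]]. simpl. unfold Rmin; destruct Rle_dec.
    + exists i; split; auto.
    + exists (S j); split; auto.
Qed.

Lemma hm_pos a : (forall i, 0 < a i) -> forall j, 0 < hm a j.
Proof.
  intros H j. destruct (hm_att a j) as [i [_ E]]. rewrite E; auto.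
Qed.

Lemma nonPi x y n0 : (1 <= n0)%nat ->
  (forall i, 0 < dist_Z (INR (n0 + i) * x + y)) ->
  (forall M, exists N, psum (fun n => hm (fun i => dist_Z (INR (n0 + i) * x + y)) (n - n0)) N > M) ->
  ~ Pi x y.
Proof.
  intros Hn0 Ha Hd HP.
  set (a := fun i => dist_Z (INR (n0 + i) * x + y)) in *.
  set (psi := fun n => hm a (n - n0)) in *.
  assert (HD : in_D psi).
  { split; [|split].
    - intros n _. unfold psi. left. apply hm_pos. exact Ha.
    - intros m n _ Hmn. unfold psi. apply hm_anti. lia.
    - exact Hd. }
  destruct (HP psi HD n0) as [n [Hn [H1 Hlt]]].
  assert (E : (n0 + (n - n0))%nat = n) by lia.
  assert (Hle : psi n <= a (n - n0)%nat) by (apply hm_le; lia).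
  unfold a in Hle. rewrite E in Hle. lra.
Qed.


Fixpoint e2 (t : nat) : nat := match t with O => 1%nat | S t => (2 * e2 t)%nat end.
Lemma e2_pos t : (1 <= e2 t)%nat. Proof. induction t; simpl; lia. Qed.
Lemma e2_mono t t' : (t <= t')%nat -> (e2 t <= e2 t')%nat.
Proof. intro H; induction H; [lia|]. simpl. pose proof (e2_pos m). lia. Qed.

Lemma pair_bound x y c : (forall n, (1 <= n)%nat -> INR n * dist_Z (INR n * x) >= c) ->
  forall u v, (u < v)%nat ->
  INR (v - u) * (dist_Z (INR u * x + y) + dist_Z (INR v * x + y)) >= c.
Proof.
  intros Hc u v Huv.
  assert (T := dist_Z_triangle (INR v * x + y) (INR u * x + y)).
  replace (INR v * x + y - (INR u * x + y)) with (INR (v - u) * x) in T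
    by (rewrite minus_INR by lia; ring).
  specialize (Hc (v - u)%nat ltac:(lia)).
  assert (0 <= INR (v - u)) by apply pos_INR.
  assert (INR (v - u) * dist_Z (INR (v - u) * x) <=
          INR (v - u) * (dist_Z (INR u * x + y) + dist_Z (INR v * x + y)))
    by (apply Rmult_le_compat_l; lra).
  lra.
Qed.

Theorem bad_empty x : Bad x -> is_empty (Phi x).
Proof.
  intros [c [Hc0 Hc]] y HP. unfold Phi in HP.
  assert (Hn0 : exists n0, (1 <= n0)%nat /\ forall i, 0 < dist_Z (INR (n0 + i) * x + y)).
  { destruct (classic (exists k, (1 <= k)%nat /\ dist_Z (INR k * x + y) = 0)) as [[k [Hk Hz]]|Hno].
    - exists (S k). split; [lia|]. intro i.
      destruct (dist_Z_nonneg (INR (S k + i) * x + y)) as [H|H]; [exact H|exfalso].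
      pose proof (pair_bound x y c Hc k (S k + i) ltac:(lia)). rewrite Hz, <- H in H0.
      lra.
    - exists 1%nat. split; [lia|]. intro i.
      destruct (dist_Z_nonneg (INR (1 + i) * x + y)) as [H|H]; [exact H|exfalso].
      apply Hno. exists (1 + i)%nat. split; [lia|auto]. }
  destruct Hn0 as [n0 [Hn0 Hpos]].
  apply (nonPi x y n0 Hn0 Hpos); [|exact HP].
  set (a := fun i => dist_Z (INR (n0 + i) * x + y)) in *.
  set (h := hm a).
  set (psi := fun n => hm a (n - n0)).
  assert (Hmono : forall m n, (1 <= m)%nat -> (m <= n)%nat -> psi n <= psi m).
  { intros m n _ Hmn. unfold psi. apply hm_anti. lia. }
  assert (Hnn : forall n, (1 <= n)%nat -> 0 <= psi n).
  { intros n _. unfold psi. left. apply hm_pos. exact Hpos. }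
  assert (Hpsi : forall j, psi (n0 + j)%nat = h j).
  { intro j. unfold psi, h. f_equal. lia. }
  assert (Hab : forall u v, (u < v)%nat -> INR (v - u) * (a u + a v) >= c).
  { intros u v Huv. unfold a.
    pose proof (pair_bound x y c Hc (n0 + u) (n0 + v) ltac:(lia)).
    replace (n0 + v - (n0 + u))%nat with (v - u)%nat in H by lia. exact H. }
  assert (Hdrop : forall j, (1 <= j)%nat -> h (2 * j)%nat < h j -> 4 * INR j * h j >= c).
  { intros j Hj Hlt.
    destruct (hm_att a (2 * j)) as [k' [Hk' E1]].
    destruct (hm_att a j) as [m [Hm E2]].
    fold h in E1, E2.
    assert (Hk'j : (j < k')%nat).
    { destruct (le_lt_dec k' j) as [L|L]; [|exact L].
      pose proof (hm_le a k' j L). fold h in H. lra. }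
    pose proof (Hab m k' ltac:(lia)).
    assert (INR (k' - m) <= 2 * INR j).
    { assert (INR (k' - m) <= INR (2 * j)) by (apply le_INR; lia).
      rewrite mult_INR in H0. simpl in H0. lra. }
    assert (0 <= INR (k' - m)) by apply pos_INR.
    assert (0 < a k') by apply Hpos.
    nra. }
  assert (Hblock : forall t, psum psi (n0 + e2 (S t))%nat >= psum psi (n0 + e2 t)%nat + INR (e2 t) * h (e2 (S t))).
  { intro t. pose proof (psum_lower psi Hmono (n0 + e2 t) (e2 t) ltac:(lia)).
    replace (n0 + e2 t + e2 t)%nat with (n0 + e2 (S t))%nat in H by (simpl; lia).
    rewrite Hpsi in H. exact H. }
  assert (Heps : exists eps, 0 < eps /\ forall T, exists t, (T <= t)%nat /\
            psum psi (n0 + e2 (S t))%nat >= psum psi (n0 + e2 t)%nat + eps).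
  { destruct (classic (exists T, forall t, (T <= t)%nat -> h (e2 (S (S t))) = h (e2 (S t)))) as [[T HT]|HT].
    - exists (h (e2 (S T))). split; [apply hm_pos; exact Hpos|].
      intros T'. exists (max T T'). split; [lia|].
      assert (Hc1 : forall t, (T <= t)%nat -> h (e2 (S t)) = h (e2 (S T))).
      { intros t Ht. induction Ht; [reflexivity|]. rewrite HT by lia. exact IHHt. }
      pose proof (Hblock (max T T')). rewrite Hc1 in H by lia.
      assert (1 <= INR (e2 (max T T'))) by (rewrite <- INR_1; apply le_INR, e2_pos).
      assert (0 < h (e2 (S T))) by (apply hm_pos; exact Hpos).
      nra.
    - exists (c / 8). split; [lra|]. intro T.
      destruct (classic (exists t, (T <= t)%nat /\ h (e2 (S (S t))) < h (e2 (S t)))) as [[t [Ht Hlt]]|Hn].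
      + exists t. split; [exact Ht|].
        assert (E : e2 (S (S t)) = (2 * e2 (S t))%nat) by reflexivity.
        rewrite E in Hlt.
        pose proof (Hdrop (e2 (S t)) (e2_pos _) Hlt).
        pose proof (Hblock t).
        assert (E2 : INR (e2 (S t)) = 2 * INR (e2 t)) by (change (e2 (S t)) with (2 * e2 t)%nat; rewrite mult_INR; simpl; ring).
        rewrite E2 in H. lra.
      + exfalso. apply HT. exists T. intros t Ht.
        apply Rle_antisym.
        * apply hm_anti. simpl. lia.
        * apply Rnot_lt_le. intro Hlt. apply Hn. exists t. split; auto. }
  destruct Heps as [eps [Heps0 Heps]].
  assert (Hk : forall k, exists T, psum psi (n0 + e2 T)%nat >= INR k * eps).
  { induction k.
    - exists O. rewrite INR_0, Rmult_0_l. pose proof (psum_nonneg psi Hnn (n0 + e2 0)). lra.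
    - destruct IHk as [T HT]. destruct (Heps T) as [t [Ht Hb]].
      exists (S t). rewrite S_INR.
      assert (psum psi (n0 + e2 T)%nat <= psum psi (n0 + e2 t)%nat)
        by (apply psum_mono; [auto|pose proof (e2_mono T t Ht); lia]).
      lra. }
  intro M. destruct (INR_archimed eps M Heps0) as [k Hk'].
  destruct (Hk k) as [T HT]. exists (n0 + e2 T)%nat. unfold psi, h, a in *. lra.
Qed.


Definition zenc (n : nat) : Z :=
  if Nat.even n then Z.of_nat (Nat.div2 n) else (- Z.of_nat (Nat.div2 n) - 1)%Z.

Lemma nat_parity n : (Nat.even n = true /\ n = (2 * Nat.div2 n)%nat) \/
                     (Nat.even n = false /\ n = (2 * Nat.div2 n + 1)%nat).
Proof.
  pose proof (Nat.div2_odd n). rewrite <- Nat.negb_even in H.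
  destruct (Nat.even n); simpl in H; [left|right]; split; auto; lia.
Qed.

Lemma zenc_inj m n : zenc m = zenc n -> m = n.
Proof.
  unfold zenc. destruct (nat_parity m) as [[E1 H1]|[E1 H1]];
  destruct (nat_parity n) as [[E2 H2]|[E2 H2]]; rewrite E1, E2; intro H; lia.
Qed.

Lemma zenc_surj z : exists n, zenc n = z.
Proof.
  destruct (Z_le_gt_dec 0 z) as [Hz|Hz].
  - exists (2 * Z.to_nat z)%nat. unfold zenc.
    set (n := (2 * Z.to_nat z)%nat).
    destruct (nat_parity n) as [[E1 H1]|[E1 H1]]; rewrite E1; unfold n in *; lia.
  - exists (2 * Z.to_nat (- z - 1) + 1)%nat. unfold zenc.
    set (n := (2 * Z.to_nat (-z-1) + 1)%nat).
    destruct (nat_parity n) as [[E1 H1]|[E1 H1]]; rewrite E1; unfold n in *; lia.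
Qed.

Section Rat.
Variables p q : Z.
Hypothesis Hq : q <> 0%Z.

Let x := IZR p / IZR q.
Let g := Z.gcd p q.
Let Q := Z.to_nat (q * q).

Lemma IZRq_ne : IZR q <> 0.
Proof. apply not_0_IZR; exact Hq. Qed.

Lemma Q_pos : (1 <= Q)%nat.
Proof. unfold Q. assert (0 < q * q)%Z by nia. lia. Qed.

Lemma INR_Q : INR Q = IZR (q * q).
Proof. unfold Q. rewrite INR_IZR_INZ, Z2Nat.id by nia. reflexivity. Qed.

Lemma Qx : INR Q * x = IZR (q * p).
Proof. rewrite INR_Q. unfold x. rewrite !mult_IZR. field. apply IZRq_ne. Qed.

Lemma g_ne : g <> 0%Z.
Proof. unfold g. intro H. apply Hq. eapply Z.gcd_eq_0_r; eauto. Qed.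

Lemma rat_forward y : (exists z, y = IZR z * IZR g / IZR q) -> Pi x y.
Proof.
  intros [z Hy].
  destruct (Z.gcd_bezout p q g eq_refl) as [u [v Huv]].
  set (n := (- (z * u))%Z).
  set (n' := (n + q * q * (Z.abs n + 1))%Z).
  assert (Hn' : (1 <= n')%Z) by (unfold n'; nia).
  set (n1 := Z.to_nat n').
  assert (E1 : INR n1 * x + y = IZR (z * v + (Z.abs n + 1) * q * p)).
  { unfold n1. rewrite INR_IZR_INZ, Z2Nat.id by lia.
    rewrite Hy, <- Huv. unfold n', n, x.
    rewrite !plus_IZR, !mult_IZR, !plus_IZR, !opp_IZR, !mult_IZR.
    field. apply IZRq_ne. }
  intros psi HD N.
  exists (n1 + S N * Q)%nat. split; [pose proof Q_pos; nia|]. split; [lia|].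
  assert (E2 : INR (n1 + S N * Q) * x + y = IZR (z * v + (Z.abs n + 1) * q * p + Z.of_nat (S N) * (q * p))).
  { replace (INR (n1 + S N * Q) * x + y) with ((INR n1 * x + y) + INR (S N) * (INR Q * x))
      by (rewrite plus_INR, mult_INR; ring).
    rewrite E1, Qx, (INR_IZR_INZ (S N)), <- mult_IZR, <- plus_IZR. reflexivity. }
  rewrite E2, dist_Z_IZR. apply psi_pos; auto. lia.
Qed.

Lemma rat_backward y : Pi x y -> exists z, y = IZR z * IZR g / IZR q.
Proof.
  intro HP.
  destruct (classic (exists n, (1 <= n)%nat /\ dist_Z (INR n * x + y) = 0)) as [[n [Hn Hz]]|Hno].
  - destruct (dist_Z_zero _ Hz) as [k Hk].
    assert (Hd : (g | k * q - Z.of_nat n * p)%Z).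
    { apply Z.divide_sub_r; [apply Z.divide_mul_r, Z.gcd_divide_r|apply Z.divide_mul_r, Z.gcd_divide_l]. }
    destruct Hd as [z Hz']. exists z.
    assert (E : IZR (k * q - Z.of_nat n * p) = IZR (z * g)) by now rewrite Hz'.
    rewrite minus_IZR, !mult_IZR, <- INR_IZR_INZ in E.
    rewrite <- E. unfold x in Hk.
    apply (Rmult_eq_reg_r (IZR q)); [|apply IZRq_ne].
    unfold Rdiv. rewrite Rmult_assoc, Rinv_l by apply IZRq_ne.
    rewrite <- Hk. field. apply IZRq_ne.
  - exfalso.
    assert (Hpos : forall i, 0 < dist_Z (INR (1 + i) * x + y)).
    { intro i. destruct (dist_Z_nonneg (INR (1 + i) * x + y)) as [H|H]; [exact H|].
      exfalso. apply Hno. exists (1 + i)%nat. split; [lia|auto]. }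
    apply (nonPi x y 1 (le_n 1) Hpos); [|exact HP].
    set (a := fun i => dist_Z (INR (1 + i) * x + y)) in *.
    assert (Hper : forall i, a (i + Q)%nat = a i).
    { intro i. unfold a. replace (INR (1 + (i + Q)) * x + y) with (INR (1 + i) * x + y + IZR (q * p)).
      - apply dist_Z_shift.
      - rewrite <- Qx. rewrite !plus_INR. ring. }
    set (c := hm a (Q - 1)).
    assert (Hc : 0 < c) by (apply hm_pos; exact Hpos).
    assert (Ha : forall i, c <= a i).
    { intro i. induction i as [i IH] using (well_founded_induction lt_wf).
      destruct (le_lt_dec Q i) as [L|L].
      - replace i with ((i - Q) + Q)%nat by lia. rewrite Hper. apply IH. pose proof Q_pos. lia.
      - apply hm_le. lia. }
    assert (Hh : forall j, c <= hm a j).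
    { intro j. destruct (hm_att a j) as [i [_ E]]. rewrite E. apply Ha. }
    assert (Hs : forall N, psum (fun n => hm a (n - 1)) N >= INR N * c).
    { induction N; simpl psum.
      - rewrite INR_0. lra.
      - rewrite S_INR. pose proof (Hh (N - 0)%nat). lra. }
    intro M. destruct (INR_archimed c M Hc) as [N HN]. exists N.
    pose proof (Hs N). unfold a in *. lra.
Qed.

Lemma rat_count : countably_infinite (Phi x).
Proof.
  exists (fun n => IZR (zenc n) * IZR g / IZR q). split.
  - intros m n E. apply zenc_inj. apply eq_IZR.
    assert (IZR g <> 0) by (apply not_0_IZR, g_ne).
    pose proof IZRq_ne.
    apply (Rmult_eq_reg_r (IZR g / IZR q)); [|unfold Rdiv; apply Rmult_integral_contrapositive_currified; [auto|apply Rinv_neq_0_compat; auto]].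
    unfold Rdiv in *. rewrite <- !Rmult_assoc. exact E.
  - intro y. split.
    + intro H. destruct (rat_backward y H) as [z Hz]. destruct (zenc_surj z) as [n Hn].
      exists n. rewrite Hn. auto.
    + intros [n Hn]. apply rat_forward. exists (zenc n). auto.
Qed.
End Rat.

Theorem rational_case x : rational x -> countably_infinite (Phi x).
Proof. intros [p [q [Hq E]]]. subst x. apply rat_count; auto. Qed.


Lemma Rabs_le_inv' t B : Rabs t <= B -> - B <= t <= B.
Proof. unfold Rabs; destruct Rcase_abs; intros; lra. Qed.

Section WAcase.
Variable x : R.
Hypothesis HWA : WA x.
Hypothesis Hirr : ~ rational x.

Lemma irr_pos n : (1 <= n)%nat -> 0 < dist_Z (INR n * x).
Proof.
  intro Hn. destruct (dist_Z_nonneg (INR n * x)) as [H|H]; [exact H|exfalso].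
  destruct (dist_Z_zero _ (eq_sym H)) as [k Hk]. apply Hirr.
  exists k, (Z.of_nat n). split; [lia|].
  rewrite <- INR_IZR_INZ, <- Hk. field. apply not_0_INR. lia.
Qed.

Lemma wa_small c : 0 < c -> exists n, (1 <= n)%nat /\ INR n * dist_Z (INR n * x) < c.
Proof.
  intro Hc. apply NNPP. intro H. apply HWA. exists c. split; [lra|].
  intros n Hn. apply Rnot_lt_ge. intro Hlt. apply H. exists n. auto.
Qed.

Definition choose (c : R) : nat :=
  epsilon (inhabits 1%nat) (fun n => (1 <= n)%nat /\ INR n * dist_Z (INR n * x) < c).

Lemma choose_spec c : 0 < c -> (1 <= choose c)%nat /\ INR (choose c) * dist_Z (INR (choose c) * x) < c.
Proof. intro Hc. unfold choose. apply epsilon_spec. apply wa_small; auto. Qed.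

Fixpoint qs (j : nat) : nat :=
  match j with
  | O => choose 1
  | S j => choose (Rmin ((/2) ^ (S j)) (dist_Z (INR (qs j) * x) / 8))
  end.

Definition d j := dist_Z (INR (qs j) * x).

Lemma qs_spec j : (1 <= qs j)%nat /\ INR (qs j) * d j < (/2) ^ j /\ 0 < d j.
Proof.
  induction j.
  - destruct (choose_spec 1 ltac:(lra)) as [H1 H2]. unfold d. simpl qs.
    split; [auto|split; [simpl; lra|apply irr_pos; auto]].
  - destruct IHj as [H1 [H2 H3]].
    assert (Hc : 0 < Rmin ((/2) ^ (S j)) (d j / 8)).
    { apply Rmin_glb_lt; [apply pow_lt; lra| unfold d in *; lra]. }
    destruct (choose_spec _ Hc) as [K1 K2]. unfold d in *. simpl qs. fold d in *.
    split; [auto|split].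
    + eapply Rlt_le_trans; [exact K2|apply Rmin_l].
    + apply irr_pos; auto.
Qed.

Lemma d_step j : d (S j) <= d j / 8.
Proof.
  destruct (qs_spec j) as [H1 [H2 H3]].
  assert (Hc : 0 < Rmin ((/2) ^ (S j)) (d j / 8)).
  { apply Rmin_glb_lt; [apply pow_lt; lra| lra]. }
  destruct (choose_spec _ Hc) as [K1 K2].
  assert (E : qs (S j) = choose (Rmin ((/2)^(S j)) (d j / 8))) by reflexivity.
  set (C := choose (Rmin ((/2)^(S j)) (d j / 8))) in *.
  set (m := Rmin ((/2)^(S j)) (d j / 8)) in *.
  unfold d at 1. rewrite E.
  assert (1 <= INR C) by (rewrite <- INR_1; apply le_INR; auto).
  pose proof (dist_Z_nonneg (INR C * x)).
  assert (m <= d j / 8) by apply Rmin_r.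
  nra.
Qed.

Lemma d_geo j k : d (j + k) <= d j * (/8) ^ k.
Proof.
  induction k.
  - rewrite Nat.add_0_r. simpl. lra.
  - rewrite Nat.add_succ_r. pose proof (d_step (j + k)). simpl pow.
    replace (d j * (/ 8 * (/ 8) ^ k)) with (d j * (/ 8) ^ k / 8) by field. lra.
Qed.

Lemma d_pos j : 0 < d j. Proof. apply qs_spec. Qed.

Definition ps j : Z := epsilon (inhabits 0%Z) (fun k => Rabs (INR (qs j) * x - IZR k) = d j).
Definition delta j := INR (qs j) * x - IZR (ps j).
Lemma delta_abs j : Rabs (delta j) = d j.
Proof. unfold delta, ps. apply epsilon_spec. apply dist_Z_attained. Qed.

Definition cn (b : nat -> bool) i : nat := if b i then 2%nat else 1%nat.
Definition cb b i := INR (cn b i).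
Lemma cb_bounds b i : 1 <= cb b i <= 2.
Proof. unfold cb, cn. destruct (b i); simpl; lra. Qed.

Definition term b j k := cb b (j + k)%nat * delta (j + k)%nat.

Lemma term_bound b j k : Rabs (term b j k) <= 2 * d j * (/8) ^ k.
Proof.
  unfold term. rewrite Rabs_mult, delta_abs.
  pose proof (cb_bounds b (j + k)). rewrite Rabs_pos_eq by lra.
  pose proof (d_geo j k). pose proof (d_pos (j + k)).
  assert (0 <= d j * (/8)^k) by (pose proof (d_pos j); pose proof (pow_le (/8) k); nra).
  nra.
Qed.

Lemma ex_geo j : ex_series (fun k => 2 * d j * (/8) ^ k).
Proof.
  apply (ex_series_scal_l (2 * d j) (fun k => (/8) ^ k)).
  apply ex_series_geom. rewrite Rabs_pos_eq; lra.
Qed.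

Lemma ex_term b j : ex_series (term b j).
Proof.
  apply (ex_series_le (term b j) (fun k => 2 * d j * (/8) ^ k)); [|apply ex_geo].
  intro k. apply term_bound.
Qed.

Definition T b j := Series (term b j).

Lemma T_rec b j : T b j = cb b j * delta j + T b (S j).
Proof.
  unfold T. rewrite Series_incr_1 by apply ex_term.
  f_equal.
  - unfold term. now rewrite Nat.add_0_r.
  - apply Series_ext. intro k. unfold term. f_equal; f_equal; lia.
Qed.

Lemma T_bound b j : Rabs (T b j) <= 3 * d j.
Proof.
  unfold T.
  assert (Hex : ex_series (fun k => Rabs (term b j k))).
  { apply (ex_series_le (fun k => Rabs (term b j k)) (fun k => 2 * d j * (/8) ^ k)); [|apply ex_geo].
    intro k. change (norm (Rabs (term b j k))) with (Rabs (Rabs (term b j k))).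
    rewrite Rabs_Rabsolu. apply term_bound. }
  eapply Rle_trans; [apply Series_Rabs; exact Hex|].
  eapply Rle_trans; [apply (Series_le _ (fun k => 2 * d j * (/8) ^ k))|].
  - intro k. split; [apply Rabs_pos|apply term_bound].
  - apply ex_geo.
  - rewrite Series_scal_l, Series_geom by (rewrite Rabs_pos_eq; lra).
    pose proof (d_pos j). lra.
Qed.

Definition yb b := - T b 0.

Fixpoint mseq b j : nat :=
  match j with O => (cn b 0 * qs 0)%nat | S j => (mseq b j + cn b (S j) * qs (S j))%nat end.
Fixpoint Pseq b j : Z :=
  match j with O => (Z.of_nat (cn b 0) * ps 0)%Z
  | S j => (Pseq b j + Z.of_nat (cn b (S j)) * ps (S j))%Z end.

Lemma cn_pos b i : (1 <= cn b i <= 2)%nat.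
Proof. unfold cn; destruct (b i); lia. Qed.

Lemma mseq_ge b j : (S j <= mseq b j)%nat.
Proof.
  induction j.
  - change (mseq b 0) with (cn b 0 * qs 0)%nat.
    destruct (qs_spec 0) as [H _]. pose proof (cn_pos b 0). nia.
  - change (mseq b (S j)) with (mseq b j + cn b (S j) * qs (S j))%nat.
    destruct (qs_spec (S j)) as [H _]. pose proof (cn_pos b (S j)). nia.
Qed.

Lemma mseq_eq b j : INR (mseq b j) * x + yb b = IZR (Pseq b j) - T b (S j).
Proof.
  induction j.
  - change (mseq b 0) with (cn b 0 * qs 0)%nat.
    change (Pseq b 0) with (Z.of_nat (cn b 0) * ps 0)%Z. unfold yb. rewrite T_rec. unfold cb, delta.
    rewrite mult_IZR, mult_INR, <- INR_IZR_INZ. ring.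
  - change (mseq b (S j)) with (mseq b j + cn b (S j) * qs (S j))%nat.
    change (Pseq b (S j)) with (Pseq b j + Z.of_nat (cn b (S j)) * ps (S j))%Z. rewrite plus_INR, mult_INR, plus_IZR, mult_IZR, <- INR_IZR_INZ.
    rewrite (T_rec b (S j)) in IHj. unfold cb, delta in IHj.
    replace ((INR (mseq b j) + INR (cn b (S j)) * INR (qs (S j))) * x + yb b)
      with (INR (mseq b j) * x + yb b + INR (cn b (S j)) * INR (qs (S j)) * x) by ring.
    rewrite IHj. ring.
Qed.

Lemma dist_mseq b j : dist_Z (INR (mseq b j) * x + yb b) <= 3 * d (S j).
Proof.
  rewrite mseq_eq. unfold Rminus. eapply Rle_trans; [apply dist_Z_small|].
  rewrite Rabs_Ropp. apply T_bound.
Qed.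

Lemma yb_Phi b : Phi x (yb b).
Proof.
  intros psi HD N. apply NNPP. intro Hno.
  destruct HD as [Hp [Hm Hd]].
  assert (H : forall n, (N < n)%nat -> (1 <= n)%nat -> psi n <= dist_Z (INR n * x + yb b)).
  { intros n H1 H2. apply Rnot_lt_le. intro Hlt. apply Hno. exists n. auto. }
  assert (Hpm : forall j, (N <= j)%nat -> psi (mseq b j) <= 3 * d (S j)).
  { intros j Hj. eapply Rle_trans; [|apply dist_mseq].
    pose proof (mseq_ge b j). apply H; lia. }
  assert (Hinc : forall j, (N <= j)%nat -> psum psi (mseq b (S j)) <= psum psi (mseq b j) + 6 * (/2) ^ (S j)).
  { intros j Hj. change (mseq b (S j)) with (mseq b j + cn b (S j) * qs (S j))%nat.
    pose proof (mseq_ge b j).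
    eapply Rle_trans; [apply psum_upper; [exact Hm|lia]|].
    pose proof (Hpm j Hj). pose proof (Hp (mseq b j) ltac:(lia)).
    destruct (qs_spec (S j)) as [Q1 [Q2 Q3]].
    rewrite mult_INR. pose proof (cn_pos b (S j)) as [C1 C2].
    apply le_INR in C2. replace (INR 2) with 2 in C2 by (simpl; ring).
    assert (0 <= INR (qs (S j))) by apply pos_INR.
    assert (0 <= INR (cn b (S j))) by apply pos_INR.
    assert (INR (cn b (S j)) * INR (qs (S j)) * psi (mseq b j) <= 2 * INR (qs (S j)) * (3 * d (S j))).
    { apply Rmult_le_compat; [nra|lra|nra|lra]. }
    lra. }
  assert (Htel : forall k, psum psi (mseq b (N + k)) + 6 * (/2) ^ (N + k) <= psum psi (mseq b N) + 6 * (/2) ^ N).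
  { induction k.
    - rewrite Nat.add_0_r. lra.
    - rewrite Nat.add_succ_r. pose proof (Hinc (N + k)%nat ltac:(lia)).
      simpl pow in *. lra. }
  destruct (Hd (psum psi (mseq b N) + 6)) as [M HM].
  assert (psum psi M <= psum psi (mseq b (N + M))).
  { apply psum_mono; [auto|]. pose proof (mseq_ge b (N + M)). lia. }
  pose proof (Htel M). pose proof (pow_le (/2) (N + M) ltac:(lra)).
  assert (Hp1 : forall n, (/2) ^ n <= 1) by (induction n; simpl; [lra| pose proof (pow_le (/2) n ltac:(lra)); lra]).
  pose proof (Hp1 N).
  lra.
Qed.

Lemma T_step b b' j : T b j = T b' j -> b j = b' j /\ T b (S j) = T b' (S j).
Proof.
  intro E. rewrite (T_rec b j), (T_rec b' j) in E.
  pose proof (T_bound b (S j)) as B1. pose proof (T_bound b' (S j)) as B2.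
  apply Rabs_le_inv' in B1. apply Rabs_le_inv' in B2.
  pose proof (d_step j). pose proof (d_pos j).
  pose proof (delta_abs j) as Hd. revert Hd. unfold Rabs. destruct Rcase_abs; intro Hd;
  unfold cb, cn in E; destruct (b j), (b' j); simpl in E; split; auto; lra.
Qed.

Lemma yb_inj b b' : yb b = yb b' -> forall j, b j = b' j.
Proof.
  intro E. unfold yb in E.
  assert (HT : forall j, T b j = T b' j).
  { induction j; [lra|]. apply T_step; auto. }
  intro j. apply (T_step b b' j (HT j)).
Qed.

End WAcase.


Definition rseq (i : nat) : R :=
  let (u, w) := Cantor.of_nat i in IZR (zenc u) / INR (S w).

Lemma rseq_dense a a' : a < a' -> exists i, a < rseq i < a'.
Proof.
  intro H.
  destruct (INR_archimed (a' - a) 1 ltac:(lra)) as [w Hw].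
  set (z := (Int_part (a * INR (S w)) + 1)%Z).
  destruct (zenc_surj z) as [u Hu].
  exists (Cantor.to_nat (u, w)). unfold rseq. rewrite Cantor.cancel_of_to, Hu.
  assert (HS : 0 < INR (S w)) by (apply lt_0_INR; lia).
  unfold z. rewrite plus_IZR.
  rewrite S_INR in *.
  destruct (base_Int_part (a * (INR w + 1))) as [B1 B2].
  assert (0 <= INR w) by apply pos_INR.
  split.
  - apply (Rmult_lt_reg_r (INR w + 1)); [lra|].
    unfold Rdiv. rewrite Rmult_assoc, Rinv_l by lra. lra.
  - apply (Rmult_lt_reg_r (INR w + 1)); [lra|].
    unfold Rdiv. rewrite Rmult_assoc, Rinv_l by lra. nra.
Qed.

Section SB.
Variable Sp : R -> Prop.
Variable F : R -> R.
Hypothesis Finj : forall a b, F a = F b -> a = b.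
Hypothesis FS : forall a, Sp (F a).

Fixpoint iterF (k : nat) (a : R) : R := match k with O => a | S k => F (iterF k a) end.
Definition Cset (a : R) : Prop := exists k a0, ~ Sp a0 /\ a = iterF k a0.
Definition G (a : R) : R := if excluded_middle_informative (Cset a) then F a else a.

Lemma SB_card : has_card_continuum Sp.
Proof.
  exists G. split.
  - intros a b. unfold G.
    destruct (excluded_middle_informative (Cset a)) as [Ca|Ca];
    destruct (excluded_middle_informative (Cset b)) as [Cb|Cb]; intro E.
    + auto.
    + exfalso. apply Cb. destruct Ca as [k [a0 [H1 H2]]]. exists (S k), a0.
      split; auto. simpl. rewrite <- H2. auto.
    + exfalso. apply Ca. destruct Cb as [k [a0 [H1 H2]]]. exists (S k), a0.
      split; auto. simpl. rewrite <- H2. auto.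
    + auto.
  - intro y. split.
    + intro Hy. destruct (classic (Cset y)) as [[k [a0 [H1 H2]]]|Cy].
      * destruct k as [|k]; [simpl in H2; subst; contradiction|].
        exists (iterF k a0). unfold G.
        destruct (excluded_middle_informative (Cset (iterF k a0))) as [C|C].
        -- simpl in H2. auto.
        -- exfalso. apply C. exists k, a0. auto.
      * exists y. unfold G. destruct (excluded_middle_informative (Cset y)); [contradiction|auto].
    + intros [a Ha]. subst y. unfold G.
      destruct (excluded_middle_informative (Cset a)) as [C|C]; [apply FS|].
      apply NNPP. intro Hn. apply C. exists O, a. auto.
Qed.
End SB.

Theorem wa_case x : WA x -> ~ rational x -> has_card_continuum (Phi x).
Proof.
  intros HWA Hirr.
  set (bits := fun a i => if Rlt_dec (rseq i) a then true else false).
  apply (SB_card (Phi x) (fun a => yb x (bits a))).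
  - intros a a' E. pose proof (yb_inj x HWA Hirr _ _ E) as Hb.
    destruct (Rtotal_order a a') as [Hlt|[Heq|Hgt]]; [exfalso| exact Heq| exfalso].
    + destruct (rseq_dense a a' Hlt) as [i [H1 H2]]. specialize (Hb i). unfold bits in Hb.
      destruct (Rlt_dec (rseq i) a); destruct (Rlt_dec (rseq i) a'); try discriminate; lra.
    + destruct (rseq_dense a' a Hgt) as [i [H1 H2]]. specialize (Hb i). unfold bits in Hb.
      destruct (Rlt_dec (rseq i) a); destruct (Rlt_dec (rseq i) a'); try discriminate; lra.
  - intro a. apply yb_Phi; auto.
Qed.

Theorem theorem19 : forall x : R,
  (rational x -> countably_infinite (Phi x)) /\
  (WA x -> ~ rational x -> has_card_continuum (Phi x)) /\
  (Bad x -> is_empty (Phi x)).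
Proof.
  intro x. split; [apply rational_case|split; [apply wa_case|apply bad_empty]].
Qed.
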